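(* Let $N\ge1$ be an integer, let $0<\sigma_0^2<\sigma_1^2$, and let $\alpha,\beta\in(0.5,1)$. Define $\eta_0:=\Gamma^{-1}\!\left(\tfrac N2,(1-\alpha)\Gamma(\tfrac N2)\right)\sigma_0^2$ and the Rao-test thresholds $\eta_1^R=(N-\sqrt{2N\lambda_1^R})\sigma_1^2$, $\eta_2^R=(N+\sqrt{2N\lambda_1^R})\sigma_1^2$, where $\lambda_1^R>0$ is chosen so that $$\frac{\Gamma(\frac N2,\frac{\eta_1^R}{\sigma_1^2})-\Gamma(\frac N2,\frac{\eta_2^R}{\sigma_1^2})}{\Gamma(\frac N2)}=\beta .$$ Let $\eta_1^r:=\Gamma^{-1}\!\left(\tfrac N2,(1-\alpha)\Gamma(\tfrac N2)\right)\sigma_0^2$ and $\eta_2^r:=2N\sigma_1^2-\eta_1^r$. If $$\beta>\frac{\Gamma(\frac N2,\frac{\eta_1^r}{\sigma_1^2})}{\Gamma(\frac N2)}-\frac{\Gamma(\frac N2,\frac{\eta_2^r}{\sigma_1^2})}{\Gamma(\frac N2)},$$ then the decision regions $\mathcal{R}_0=\{Y<\eta_0\}$ and $\mathcal{R}_1=\{\eta_1^R<Y<\eta_2^R\}$ overlap, i.e., $\eta_1^R<\eta_0$.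
   Context: Observations $y_0,\dots,y_{N-1}$ are i.i.d. $\mathcal{N}(0,\sigma^2)$; the test statistic is $Y=\sum_{n=0}^{N-1}y_n^2$. Hypotheses: $\mathcal{H}_0:\sigma^2=\sigma_0^2$, $\mathcal{H}_1:\sigma^2=\sigma_1^2$, $\mathcal{H}_2:\sigma^2\in(\sigma_0^2,\sigma_1^2)\cup(\sigma_1^2,\infty)$. $\Gamma(a)$ is the Gamma function, $\Gamma(a,x)=\int_x^\infty t^{a-1}e^{-t}dt$ the upper incomplete Gamma function, and $\Gamma^{-1}(a,\cdot)$ the inverse of $x\mapsto\Gamma(a,x)$. The Rao test statistic is $T_R=\frac{(Y-N\sigma_1^2)^2}{2N\sigma_1^4}$, declaring $\mathcal{H}_1$ when $T_R<\lambda_1^R$, i.e., when $\eta_1^R<Y<\eta_2^R$. The detection subproblem declares $\mathcal{H}_0$ on $\{Y<\eta_0\}$; ''overlapping'' means $\mathcal{R}_0\cap\mathcal{R}_1\ne\emptyset$, i.e., $\eta_1^R<\eta_0$. *)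

(* Defs.v *)
From HB Require Import structures.
From mathcomp Require Import all_boot all_order all_algebra.
From mathcomp Require Import all_classical all_reals all_analysis.
Set Implicit Arguments. Unset Strict Implicit. Unset Printing Implicit Defensive.
Import Order.TTheory GRing.Theory Num.Theory.
Local Open Scope classical_set_scope.
Local Open Scope ring_scope.

(* The integrand is taken to be supported on t > 0 (Gamma-distribution
   convention), so that Gamma(a,x) = Gamma(a) for x <= 0. *)
Definition upper_gamma {R : realType} (a x : R) : R :=
  fine (\int[@lebesgue_measure R]_(t in `](Num.max x 0)%R, +oo[)
          (powR t (a - 1) * expR (- t))%:E)%E.

Definition gamma_fun {R : realType} (a : R) : R := upper_gamma a 0.

(* Inverse of x |-> Gamma(a,x) on [0,+oo): some x >= 0 with Gamma(a,x) = y
   (unique when 0 < a and 0 < y <= Gamma(a)); default 0 otherwise. *)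
Definition upper_gamma_inv {R : realType} (a y : R) : R :=
  xget 0 [set x : R | 0 <= x /\ upper_gamma a x = y].

(* Main.v *)
Require Import Defs.
From HB Require Import structures.
From mathcomp Require Import all_boot all_order all_algebra.
From mathcomp Require Import all_classical all_reals all_analysis.
From mathcomp Require Import measurable_realfun. 
From mathcomp Require Import ring lra.
Import Order.TTheory GRing.Theory Num.Theory.
Local Open Scope ring_scope.
Local Open Scope classical_set_scope.

Lemma ug_le (R : realType) (a x y : R) : gamma_fun a != 0 -> x <= y ->
  upper_gamma a y <= upper_gamma a x.
Proof.
move=> g0 xy.
set F := fun t : R => (powR t (a - 1) * expR (- t))%:E.
have mF : measurable_fun [set: R] (fun t : R => (powR t (a - 1) * expR (- t))%:E).
  apply/measurable_EFinP; apply: measurable_funM => //.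
  apply: measurableT_comp => //; exact: measurable_expR.
have F0 : forall t, (0 <= F t)%E by move=> t; rewrite lee_fin mulr_ge0 // ?powR_ge0 ?expR_ge0.
have sub : forall m m' : R, m <= m' ->
  (\int[lebesgue_measure]_(t in `]m', +oo[) F t <= \int[lebesgue_measure]_(t in `]m, +oo[) F t)%E.
  move=> m m' mm; apply: ge0_subset_integral => //.
  - exact: measurable_funTS.
  - by move=> t; rewrite /= !in_itv /= !andbT => /(le_lt_trans mm).
have fin : forall m : R, 0 <= m -> (\int[lebesgue_measure]_(t in `]m, +oo[) F t)%E \is a fin_num.
  move=> m m0; rewrite ge0_fin_numE; last exact: integral_ge0.
  apply: (le_lt_trans (sub _ _ m0)).
  move: g0; rewrite /gamma_fun /upper_gamma maxxx -/F.
  have : (0 <= (\int[lebesgue_measure]_(x in `]0%R, +oo[) F x)%E)%E by exact: integral_ge0.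
  case: (\int[lebesgue_measure]_(x in `]0%R, +oo[) F x)%E => //= [r|]; last by rewrite eqxx.
  by rewrite ltry.
rewrite /upper_gamma -/F; apply: fine_le.
- by apply: fin; rewrite le_max lexx orbT.
- by apply: fin; rewrite le_max lexx orbT.
apply: sub; rewrite ge_max !le_max xy lexx /= orbT.
by [].
Qed.

Theorem theorem2 (R : realType) (N : nat) (s0 s1 alpha beta lamR : R) :
  (1 <= N)%N ->
  0 < s0 -> s0 < s1 ->
  1/2 < alpha < 1 -> 1/2 < beta < 1 ->
  let a := N%:R / 2 in
  let eta0 := upper_gamma_inv a ((1 - alpha) * gamma_fun a) * s0 in
  let eta1R := (N%:R - Num.sqrt (2 * N%:R * lamR)) * s1 in
  let eta2R := (N%:R + Num.sqrt (2 * N%:R * lamR)) * s1 in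
  0 < lamR ->
  (upper_gamma a (eta1R / s1) - upper_gamma a (eta2R / s1)) / gamma_fun a = beta ->
  let eta1r := upper_gamma_inv a ((1 - alpha) * gamma_fun a) * s0 in
  let eta2r := 2 * N%:R * s1 - eta1r in
  beta > upper_gamma a (eta1r / s1) / gamma_fun a
         - upper_gamma a (eta2r / s1) / gamma_fun a ->
  eta1R < eta0.
Proof.
move=> _ s00 s01 _ /andP[hb _] a eta0 eta1R eta2R _ hbeta eta1r eta2r hgt.
have s10 : 0 < s1 by apply: lt_trans s01.
have s1n : s1 != 0 by rewrite gt_eqF.
set G := gamma_fun a.
have G0 : G != 0.
  apply/negP => /eqP G0; move: hbeta; rewrite -/G G0 invr0 mulr0 => hb0.
  by rewrite -hb0 in hb; lra.
have Gge0 : 0 <= G by apply: fine_ge0; apply: integral_ge0 => t _; rewrite lee_fin mulr_ge0 // ?powR_ge0 ?expR_ge0.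
have Gpos : 0 < G by rewrite lt_def G0.
rewrite ltNge; apply/negP => hle.
set x := N%:R - Num.sqrt (2 * N%:R * lamR).
set u := eta0 / s1.
have e1 : eta1R / s1 = x by rewrite /eta1R mulfK.
have e2 : eta2R / s1 = 2 * N%:R - x by rewrite /eta2R mulfK // /x; ring.
have e3 : eta2r / s1 = 2 * N%:R - u by rewrite /eta2r /u -/eta0 mulrBl mulfK.
have ux : u <= x by rewrite /u ler_pdivrMr // -/eta0.
move: hgt; rewrite -hbeta e1 e2 e3 -/eta0 -/u -/G ltNge => /negP; apply.
rewrite -mulrBl ler_wpM2r // ?invr_ge0 //.
apply: lerB; first exact: ug_le.
apply: ug_le => //; exact: lerB.
Qed.
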